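(* For any $\epsilon>0$ and $m\in\mathbb{N}$ there exist $d=d(\epsilon,m)\in\mathbb{N}$ and $\tau=\tau(\epsilon,m)>0$ with the following property. Let $\mathbf{P}=(P_1,\dots,P_C)$ be a sequence of polynomials $\mathbb{F}_p^n\to\mathbb{T}$ of degree at most $d$, and let $\Gamma,\widetilde{\Gamma}:\mathbb{T}^C\to[0,1]$ be functions with $\|\Gamma-\widetilde{\Gamma}\|_\infty\le\tau$. Then $\mathrm{d_{TV}}(\mu_{\Gamma\circ\mathbf{P},m},\mu_{\widetilde{\Gamma}\circ\mathbf{P},m})\le\epsilon$.
   Context: Fix a prime $p$; $\mathbb{T}=\mathbb{R}/\mathbb{Z}$. A (non-classical) polynomial $P:\mathbb{F}_p^n\to\mathbb{T}$ has degree at most $d$ if $D_{y_1}\cdots D_{y_{d+1}}P\equiv0$ where $D_hP(x)=P(x+h)-P(x)$. $(\Gamma\circ\mathbf{P})(x)=\Gamma(P_1(x),\dots,P_C(x))$. For $f:\mathbb{F}_p^n\to[0,1]$ and $m\le n$, $\mu_{f,m}$ is the distribution of $f'\circ A:\mathbb{F}_p^m\to\{0,1\}$, where $f':\mathbb{F}_p^n\to\{0,1\}$ is random with $\Pr[f'(x)=1]=f(x)$ independently for all $x$, and $A:\mathbb{F}_p^m\to\mathbb{F}_p^n$ is a uniformly random affine embedding (injective affine map), independent of $f'$. $\mathrm{d_{TV}}(\mu,\mu')=\frac12\sum_a|\mu(a)-\mu'(a)|$ is the statistical distance. *)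

(* Defs.v *)
From HB Require Import structures.
From mathcomp Require Import all_boot all_order all_algebra.
From mathcomp Require Import reals.
Set Implicit Arguments. Unset Strict Implicit. Unset Printing Implicit Defensive.
Import Order.TTheory GRing.Theory Num.Theory.
Local Open Scope ring_scope.

(* T = R/Z is represented by real lifts; [frac] is the canonical representative in [0,1). *)
Definition frac {R : archiRealFieldType} (x : R) : R := x - (Num.floor x)%:~R.

(* Points of T^C, represented in [0,1)^C. *)
Definition in_torus {R : realType} (C : nat) (t : 'I_C -> R) : Prop :=
  forall i, 0 <= t i < 1.

Definition diffop {R : zmodType} (p n : nat) (h : 'rV['F_p]_n)
  (P : 'rV['F_p]_n -> R) : 'rV['F_p]_n -> R := fun x => P (x + h) - P x.

(* A (non-classical) polynomial F_p^n -> T (given by a real lift P) has degree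
   at most d iff D_{y_1}...D_{y_{d+1}} P == 0 in T, i.e. is integer-valued on lifts. *)
Definition is_poly_deg {R : realType} (p n d : nat) (P : 'rV['F_p]_n -> R) : Prop :=
  forall (ys : (d.+1).-tuple 'rV['F_p]_n) (x : 'rV['F_p]_n),
    (foldr (@diffop R p n) P ys) x \is a Num.int.

Definition compose_GP {R : realType} (p n C : nat) (G : ('I_C -> R) -> R)
  (P : 'I_C -> 'rV['F_p]_n -> R) : 'rV['F_p]_n -> R :=
  fun x => G (fun i => frac (P i x)).

Definition affine_emb (p m n : nat) : {set 'M['F_p]_(m, n) * 'rV['F_p]_n} :=
  [set Ab | injectiveb (fun z : 'rV['F_p]_m => z *m Ab.1 + Ab.2)].

(* Probability that the random f' : F_p^n -> {0,1} equals g. *)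
Definition weight {R : realType} (p n : nat) (f : 'rV['F_p]_n -> R)
  (g : {ffun 'rV['F_p]_n -> bool}) : R :=
  \prod_(x : 'rV['F_p]_n) (if g x then f x else 1 - f x).

Definition mu {R : realType} (p n : nat) (f : 'rV['F_p]_n -> R) (m : nat)
  (a : {ffun 'rV['F_p]_m -> bool}) : R :=
  (#|affine_emb p m n|%:R)^-1 *
  \sum_(Ab in affine_emb p m n)
    \sum_(g : {ffun 'rV['F_p]_n -> bool})
       weight f g *
       ([ffun z : 'rV['F_p]_m => g (z *m Ab.1 + Ab.2)] == a)%:R.

Definition dTV {R : realType} (m p : nat)
  (mu1 mu2 : {ffun 'rV['F_p]_m -> bool} -> R) : R :=
  2^-1 * \sum_(a : {ffun 'rV['F_p]_m -> bool}) `|mu1 a - mu2 a|.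
Arguments mu {R p n} f m a.

(* Main.v *)
From Pilot Require Import Defs.
From HB Require Import structures.
From mathcomp Require Import all_boot all_order all_algebra.
From mathcomp Require Import reals.
From mathcomp Require Import ring lra.
Import Order.TTheory GRing.Theory Num.Theory.
Local Open Scope ring_scope.

Section Gen.
Variable R : realType.
Variables (X A : finType) (phi : {ffun X -> bool} -> A).

Definition cw (k : X -> R) (y : X) (b : bool) : R := if b then k y else 1 - k y.
Definition wt (k : X -> R) (g : {ffun X -> bool}) : R := \prod_y cw k y (g y).
Definition EE (k k' : X -> R) (a : A) : R :=
  \sum_g (wt k g - wt k' g) * (phi g == a)%:R.
Definition Dl (k k' : X -> R) : R := \sum_a `|EE k k' a|.
Definition flip (x0 : X) (g : {ffun X -> bool}) : {ffun X -> bool} :=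
  [ffun y => if y == x0 then ~~ g y else g y].
Definition hyb (h h' : X -> R) (s : seq X) : X -> R :=
  fun x => if x \in s then h' x else h x.

Lemma wt_ext k1 k2 g : (forall x, k1 x = k2 x) -> wt k1 g = wt k2 g.
Proof. by move=> H; apply: eq_bigr => y _; rewrite /cw H. Qed.

Lemma Dl_ext k1 k2 k3 k4 : (forall x, k1 x = k2 x) -> (forall x, k3 x = k4 x) ->
  Dl k1 k3 = Dl k2 k4.
Proof.
move=> H1 H2; apply: eq_bigr => a _; rewrite /EE; congr `|_|.
by apply: eq_bigr => g _; rewrite (wt_ext _ _ g H1) (wt_ext _ _ g H2).
Qed.

Lemma Dl_tri k1 k2 k3 : Dl k1 k3 <= Dl k1 k2 + Dl k2 k3.
Proof.
rewrite /Dl -big_split /=; apply: ler_sum => a _.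
have -> : EE k1 k3 a = EE k1 k2 a + EE k2 k3 a.
  rewrite /EE -big_split /=; apply: eq_bigr => g _; rewrite -mulrDl.
  by rewrite addrA subrK.
exact: ler_normD.
Qed.

Lemma flipK x0 : involutive (flip x0).
Proof.
move=> g; apply/ffunP => y; rewrite !ffunE.
by case: (y == x0) => //; rewrite negbK.
Qed.

Lemma Dl_point (k k' : X -> R) (x0 : X) (S : pred X) :
  (forall y, y != x0 -> k y = k' y) ->
  (forall y, 0 <= k y <= 1) ->
  (forall g, x0 \notin S -> phi (flip x0 g) = phi g) ->
  Dl k k' <= 2 * ((x0 \in S)%:R * `|k x0 - k' x0|).
Proof.
move=> Hk H01 Hphi.
set d := k x0 - k' x0.
pose r (g : {ffun X -> bool}) := \prod_(y | y != x0) cw k y (g y).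
have HD g : wt k g - wt k' g = (if g x0 then d else - d) * r g.
  rewrite /wt (bigD1 x0) //= [X in _ - X](bigD1 x0) //=.
  have -> : \prod_(y | y != x0) cw k' y (g y) = r g.
    by apply: eq_bigr => y Hy; rewrite /cw (Hk y Hy).
  rewrite -mulrBl /cw /d; congr (_ * _); case: (g x0) => //; ring.
have Hr (g : {ffun X -> bool}) : 0 <= r g.
  apply: prodr_ge0 => y _; rewrite /cw; case: (g y);
  by case/andP: (H01 y) => // _; rewrite subr_ge0.
have Hsum : \sum_g r g = 2.
  have -> : \sum_g r g = \sum_(g : {ffun X -> bool})
      \prod_y (if y == x0 then 1 else cw k y (g y)).
    apply: eq_bigr => g _; rewrite /r [RHS](bigD1 x0) //= eqxx mul1r.
    by apply: eq_bigr => y /negbTE ->.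
  rewrite -(bigA_distr_bigA (fun y b => if y == x0 then 1 else cw k y b)) /=.
  rewrite (bigD1 x0) //= big_bool eqxx big1 ?mulr1 // => y /negbTE Hy.
  by rewrite big_bool /= Hy /cw; ring.
case: (boolP (x0 \in S)) => HS.
- rewrite mul1r /Dl.
  apply: (le_trans (y := \sum_a \sum_g `|wt k g - wt k' g| * (phi g == a)%:R)).
    apply: ler_sum => a _; apply: (le_trans (ler_norm_sum _ _ _)).
    by apply: ler_sum => g _; rewrite normrM normr_nat.
  rewrite exchange_big /=.
  have -> : \sum_g \sum_a `|wt k g - wt k' g| * (phi g == a)%:R
         = \sum_g `|d| * r g.
    apply: eq_bigr => g _; rewrite -mulr_sumr (bigD1 (phi g)) //= eqxx big1.
      by rewrite addr0 mulr1 HD normrM (ger0_norm (Hr g)); case: ifP => _; rewrite ?normrN.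
    by move=> a Ha; rewrite eq_sym (negbTE Ha).
  by rewrite -mulr_sumr Hsum mulrC.
- rewrite mul0r mulr0 /Dl big1 // => a _.
  suff -> : EE k k' a = 0 by rewrite normr0.
  set s := EE k k' a.
  have Hs : s = - s.
    rewrite {1}/s /EE (reindex_inj (can_inj (flipK x0))) /= /s /EE -sumrN.
    apply: eq_bigr => g _; rewrite Hphi // !HD.
    have -> : r (flip x0 g) = r g.
      by apply: eq_bigr => y Hy; rewrite ffunE (negbTE Hy).
    rewrite ffunE eqxx; case: (g x0) => /=; ring.
  lra.
Qed.

Lemma Dl_hyb (h h' : X -> R) (S : pred X) (s : seq X) :
  (forall y, 0 <= h y <= 1) -> (forall y, 0 <= h' y <= 1) ->
  (forall x g, x \notin S -> phi (flip x g) = phi g) ->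
  Dl h (hyb h h' s) <= 2 * \sum_(x <- s) (x \in S)%:R * `|h x - h' x|.
Proof.
move=> H1 H2 Hphi; elim: s => [|x s IH].
  rewrite big_nil mulr0.
  rewrite (@Dl_ext h h (hyb h h' [::]) h) // /Dl big1 // => a _.
  rewrite /EE big1 ?normr0 // => g _; by rewrite subrr mul0r.
apply: (le_trans (Dl_tri _ (hyb h h' s) _)).
rewrite big_cons mulrDr addrC; apply: lerD => //.
apply: (le_trans (@Dl_point (hyb h h' s) (hyb h h' (x :: s)) x S _ _ _)).
- by move=> y Hy; rewrite /hyb in_cons (negbTE Hy).
- by move=> y; rewrite /hyb; case: ifP.
- by move=> g; apply: Hphi.
  - rewrite ler_pM2l //; apply: ler_wpM2l; first by case: (x \in S).
  rewrite /hyb in_cons eqxx /=; case: ifP => _; last by [].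
  by rewrite subrr normr0.
Qed.

Lemma Dl_bound (h h' : X -> R) (S : {set X}) (tau : R) : 0 <= tau ->
  (forall y, 0 <= h y <= 1) -> (forall y, 0 <= h' y <= 1) ->
  (forall x, `|h x - h' x| <= tau) ->
  (forall x g, x \notin S -> phi (flip x g) = phi g) ->
  Dl h h' <= 2 * (#|S|%:R * tau).
Proof.
move=> Htau H1 H2 Ht Hphi.
rewrite (@Dl_ext h h h' (hyb h h' (enum X))) //; last first.
  by move=> x; rewrite /hyb mem_enum.
apply: (le_trans (@Dl_hyb h h' (mem S) (enum X) H1 H2 _)) => //.
rewrite ler_pM2l // big_enum /=.
apply: (le_trans (y := \sum_(x in X) (x \in S)%:R * tau)).
  by apply: ler_sum => x _; apply: ler_wpM2l => //; case: (x \in S).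
rewrite -mulr_suml; apply: ler_wpM2r; first by [].
have -> : \sum_(i in X) (i \in S)%:R = \sum_(i in S) (1:R).
  by rewrite [RHS]big_mkcond /=; apply: eq_bigr => i _; case: (i \in S).
by rewrite sumr_const.
Qed.

End Gen.
Arguments EE {R X A} phi k k' a.
Arguments Dl {R X A} phi k k'.

Definition phiAb (p m n : nat) (Ab : 'M['F_p]_(m, n) * 'rV['F_p]_n)
  (g : {ffun 'rV['F_p]_n -> bool}) : {ffun 'rV['F_p]_m -> bool} :=
  [ffun z => g (z *m Ab.1 + Ab.2)].

Theorem lemma5p3 (R : realType) (p : nat) : prime p ->
  forall (eps : R) (m : nat), 0 < eps ->
  exists (d : nat) (tau : R), 0 < tau /\
  forall (n C : nat) (P : 'I_C -> 'rV['F_p]_n -> R) (G G' : ('I_C -> R) -> R),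
    (m <= n)%N ->
    (forall i, is_poly_deg d (P i)) ->
    (forall t, in_torus t -> 0 <= G t <= 1) ->
    (forall t, in_torus t -> 0 <= G' t <= 1) ->
    (forall t, in_torus t -> `|G t - G' t| <= tau) ->
    dTV (mu (compose_GP G P) m) (mu (compose_GP G' P) m) <= eps.
Proof.
move=> pp eps m eps0.
set M := #|'rV['F_p]_m|.
have M0 : (0 < M)%N by apply/card_gt0P; exists 0.
have M0' : 0 < (M%:R : R) by rewrite ltr0n.
exists 0%N, (eps / M%:R); split; first by rewrite divr_gt0.
move=> n C P G G' _ _ HG HG' HGG.
set tau := eps / M%:R.
have tau0 : 0 <= tau by rewrite divr_ge0 // ltW.
have Htor x : in_torus (fun i => Pilot.Defs.frac (P i x)).
  move=> i; rewrite /Pilot.Defs.frac.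
  have := @Num.Theory.floorD1_gt R (P i x); rewrite intrD /=; have := @Num.Theory.floor_le R (P i x).
  move=> H1 H2; apply/andP; split; lra.
set f := compose_GP G P; set f' := compose_GP G' P.
have Hf x : 0 <= f x <= 1 by apply: HG.
have Hf' x : 0 <= f' x <= 1 by apply: HG'.
have Hff x : `|f x - f' x| <= tau by apply: HGG.
set E := affine_emb p m n.
set N : R := #|E|%:R.
have Hdiff a : mu f m a - mu f' m a =
    N^-1 * \sum_(Ab in E) EE (@phiAb p m n Ab) f f' a.
  rewrite /mu -mulrBr -sumrB; congr (_ * _); apply: eq_bigr => Ab _.
  rewrite /EE -sumrB; apply: eq_bigr => g _; rewrite mulrBl //.
have HDl Ab : Dl (@phiAb p m n Ab) f f' <= 2 * (M%:R * tau).
  set S := [set (z *m Ab.1 + Ab.2) | z : 'rV['F_p]_m].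
  apply: (le_trans (@Dl_bound _ _ _ (@phiAb p m n Ab) f f' S tau tau0 Hf Hf' Hff _)).
    move=> x g Hx; apply/ffunP => z; rewrite !ffunE.
    have Hne : (z *m Ab.1 + Ab.2) != x.
      by apply: contraNneq Hx => <-; apply: imset_f.
    by rewrite (negbTE Hne).
  rewrite ler_pM2l // ler_wpM2r // ler_nat.
  exact: leq_imset_card.
rewrite /dTV.
apply: (le_trans (y := 2^-1 * (N^-1 * \sum_(Ab in E) Dl (@phiAb p m n Ab) f f'))).
  rewrite ler_pM2l ?invr_gt0 //.
  under eq_bigr do rewrite Hdiff.
  rewrite /Dl exchange_big mulr_sumr /=.
  apply: ler_sum => a _.
  rewrite normrM ger0_norm ?invr_ge0 ?ler0n //.
  apply: ler_wpM2l; first by rewrite invr_ge0 ler0n.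
  exact: ler_norm_sum.
apply: (le_trans (y := 2^-1 * (N^-1 * \sum_(Ab in E) 2 * (M%:R * tau)))).
  rewrite ler_pM2l ?invr_gt0 //; apply: ler_wpM2l; first by rewrite invr_ge0 ler0n.
  by apply: ler_sum => Ab _; apply: HDl.
rewrite sumr_const /N.
case: (posnP #|E|) => [->|HE]; first by rewrite mulr0n !mulr0 ltW.
have HN : (#|E|%:R : R) != 0 by rewrite pnatr_eq0 -lt0n.
have HM : (M%:R : R) != 0 by rewrite gt_eqF.
rewrite -mulr_natl /tau.
rewrite le_eqVlt; apply/orP; left; apply/eqP. field.
by rewrite HN HM.
Qed.
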